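(* For any oriented tree-structure $\psi$, the $R$-linear map $\nu_0:\mathcal{T}_0(\psi)\to\mathcal{T}_0(\psi)\otimes\mathcal{T}_0(\psi)$ given on generators by $$\nu_0(T,t)=\sum_{e\in\operatorname{edg}(T)}\Big((T^1_e,t|_{T^1_e})\otimes(T^2_e,t|_{T^2_e})-(T^2_e,t|_{T^2_e})\otimes(T^1_e,t|_{T^1_e})\Big)$$ is a Lie cobracket.
   Context: $R$ commutative ring with unit. A Lie cobracket on an $R$-module $A$ is an $R$-linear $\nu:A\to A\otimes A$ with $\operatorname{Perm}\circ\nu=-\nu$ ($\operatorname{Perm}(x\otimes y)=y\otimes x$) and $(\mathrm{id}+\tau+\tau^2)(\mathrm{id}\otimes\nu)\nu=0$, $\tau(x\otimes y\otimes z)=z\otimes x\otimes y$. An oriented tree is a finite tree with oriented edges; its subtrees (trees formed by some of its vertices and edges) inherit orientations. $OTrees$ is the category of oriented trees with orientation-preserving embeddings (homeomorphisms onto subtrees, mapping vertices to vertices and edges to edges). An oriented tree-structure is a contravariant functor $\psi$ from $OTrees$ to sets; an oriented $\psi$-tree is a pair $(T,t)$, $t\in\psi(T)$; $(T,t)$ and $(\tilde T,\tilde t)$ are homeomorphic if there is an (orientation-preserving) homeomorphism $j:T\to\tilde T$ with $\psi(j)(\tilde t)=t$; $t|_{T'}=\psi(\iota)(t)$ for the inclusion $\iota:T'\to T$. $\mathcal{T}_0(\psi)$ is the free $R$-module on homeomorphism classes of oriented $\psi$-trees. For an edge $e$, removing its interior leaves two subtrees $T^1_e,T^2_e$, numbered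 so that $e$ is directed from a vertex of $T^2_e$ to a vertex of $T^1_e$. *)

(* Defs.v *)
From HB Require Import structures.
From mathcomp Require Import all_boot all_order all_algebra.
From mathcomp Require Import boolp.
From mathcomp.multinomials Require Import freeg.
From Stdlib Require Import ClassicalEpsilon.

Set Implicit Arguments.
Unset Strict Implicit.
Unset Printing Implicit Defensive.

Import GRing.Theory.
Local Open Scope ring_scope.

Definition adj_on (nv ne : nat) (src tgt : 'I_ne -> 'I_nv) (ok : pred 'I_ne)
  : rel 'I_nv :=
  fun x y => [exists e, ok e &&
     (((src e == x) && (tgt e == y)) || ((src e == y) && (tgt e == x)))].

Definition is_tree (nv ne : nat) (src tgt : 'I_ne -> 'I_nv) : bool :=
  (nv == ne.+1) && [forall x, forall y, connect (adj_on src tgt predT) x y].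

Record otree := OTree {
  onv : nat;
  one : nat;
  osrc : 'I_one -> 'I_onv;
  otgt : 'I_one -> 'I_onv;
  otree_ok : is_tree osrc otgt }.

Record emb (T T' : otree) := Emb {
  emb_v : 'I_(onv T) -> 'I_(onv T');
  emb_e : 'I_(one T) -> 'I_(one T');
  emb_v_inj : injective emb_v;
  emb_e_inj : injective emb_e;
  emb_src : forall e, @osrc T' (emb_e e) = emb_v (@osrc T e);
  emb_tgt : forall e, @otgt T' (emb_e e) = emb_v (@otgt T e) }.

Definition emb_id (T : otree) : emb T T :=
  @Emb T T id id (@inj_id _) (@inj_id _) (fun _ => erefl) (fun _ => erefl).

Definition emb_comp (T1 T2 T3 : otree) (g : emb T2 T3) (f : emb T1 T2) : emb T1 T3.
Proof.
refine (@Emb T1 T3 (emb_v g \o emb_v f) (emb_e g \o emb_e f)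
          (inj_comp (@emb_v_inj _ _ g) (@emb_v_inj _ _ f))
          (inj_comp (@emb_e_inj _ _ g) (@emb_e_inj _ _ f)) _ _).
- by move=> e /=; rewrite emb_src emb_src.
- by move=> e /=; rewrite emb_tgt emb_tgt.
Defined.

Record otree_structure := OTreeStructure {
  psi_obj : otree -> Type;
  psi_map : forall T T' : otree, emb T T' -> psi_obj T' -> psi_obj T;
  psi_id : forall T (x : psi_obj T), psi_map (emb_id T) x = x;
  psi_comp : forall T1 T2 T3 (g : emb T2 T3) (f : emb T1 T2) (x : psi_obj T3),
      psi_map (emb_comp g f) x = psi_map f (psi_map g x) }.

Section PsiTrees.
Variable psi : otree_structure.

Definition psitree := {T : otree & psi_obj psi T}.

Definition homeo (x y : psitree) : Prop :=
  exists j : emb (projT1 x) (projT1 y),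
    [/\ bijective (emb_v j), bijective (emb_e j) &
        psi_map j (projT2 y) = projT2 x].

Definition hclass := {P : psitree -> Prop | exists x, P = homeo x}.

HB.instance Definition _ := gen_eqMixin hclass.
HB.instance Definition _ := gen_choiceMixin hclass.

Definition cls (x : psitree) : hclass := exist _ (homeo x) (ex_intro _ x erefl).

(* For an edge e of T: T^1_e is the subtree containing the target of e,
   T^2_e the one containing its source, after removing the interior of e.
   [is_piece T e b S i] says that the embedding i : S -> T is an isomorphism
   onto T^1_e (b = true) resp. T^2_e (b = false). *)
Definition piece_v (T : otree) (e : 'I_(one T)) (b : bool) : pred 'I_(onv T) :=
  fun v => connect (adj_on (@osrc T) (@otgt T) (predC1 e))
                   (if b then @otgt T e else @osrc T e) v.

Definition is_piece (T : otree) (e : 'I_(one T)) (b : bool)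
    (S : otree) (i : emb S T) : Prop :=
  (forall v, piece_v e b v <-> exists w, emb_v i w = v) /\
  (forall f, ((f != e) && piece_v e b (@osrc T f) && piece_v e b (@otgt T f))
              <-> exists g, emb_e i g = f).

End PsiTrees.

(* Free modules and tensor products.  The free R-module on a set X is  *)
(* {freeg X / R}; the tensor product of free modules on X and Y is     *)
(* realized as the free module on X * Y (basis x (x) y <-> (x, y)).    *)

Section Tensor.
Variables (R : comNzRingType) (K : choiceType).

Definition F1 := {freeg K / R}.
Definition F2 := {freeg (K * K)%type / R}.
Definition F3 := {freeg (K * K * K)%type / R}.

Definition tperm : F2 -> F2 := fglift (fun p : K * K => << (p.2, p.1) >> : F2).

Definition ttau : F3 -> F3 :=
  fglift (fun p : K * K * K => << (p.2, p.1.1, p.1.2) >> : F3).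

Definition id_tensor (nu : F1 -> F2) : F2 -> F3 :=
  fglift (fun p : K * K =>
    fglift (fun q : K * K => << (p.1, q.1, q.2) >> : F3) (nu << p.2 >>)).

Definition lie_cobracket (nu : F1 -> F2) : Prop :=
  [/\ linear nu,
      forall x, tperm (nu x) = - nu x &
      forall x, let w := id_tensor nu (nu x) in w + ttau w + ttau (ttau w) = 0].

End Tensor.

(* The cobracket nu_0 on T_0(psi) = {freeg hclass psi / R}.            *)

Section Nu0.
Variables (R : comNzRingType) (psi : otree_structure).

Local Notation K := (hclass psi).

Definition nu_edge (T : otree) (t : psi_obj psi T) (e : 'I_(one T)) : F2 R K :=
  epsilon (inhabits 0) (fun z : F2 R K =>
    exists (S1 : otree) (i1 : emb S1 T) (S2 : otree) (i2 : emb S2 T),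
      [/\ is_piece e true i1, is_piece e false i2 &
        let c1 := cls (existT _ S1 (psi_map i1 t)) in
        let c2 := cls (existT _ S2 (psi_map i2 t)) in
        z = << (c1, c2) >> - << (c2, c1) >>]).

Definition nu0_gen (c : K) : F2 R K :=
  epsilon (inhabits 0) (fun z : F2 R K =>
    exists (T : otree) (t : psi_obj psi T),
      cls (existT _ T t) = c /\ z = \sum_(e < one T) nu_edge t e).

Definition nu0 : F1 R K -> F2 R K := fglift nu0_gen.

End Nu0.

(* Main.v *)
Require Import Defs.
From mathcomp Require Import all_boot all_order all_algebra.
From mathcomp Require Import ssrAC zify.
From mathcomp.multinomials Require Import freeg.
From Stdlib Require Import ClassicalEpsilon FunctionalExtensionality ProofIrrelevance PropExtensionality.
Set Implicit Arguments.
Unset Strict Implicit.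
Unset Printing Implicit Defensive.

Module G1.

Section Graph.
Variables (nv ne : nat) (src tgt : 'I_ne -> 'I_nv).
Local Notation adj := (adj_on src tgt).

Lemma adj_sym (ok : pred 'I_ne) : symmetric (adj ok).
Proof.
move=> x y; apply/existsP/existsP => -[e He]; exists e;
  by move: He; rewrite orbC.
Qed.

Lemma adjP (ok : pred 'I_ne) x y : reflect (exists e, [/\ ok e & (src e == x) && (tgt e == y) || (src e == y) && (tgt e == x)]) (adj ok x y).
Proof.
apply: (iffP existsP) => -[e He]; exists e.
  by case/andP: He.
by case: He => -> ->.
Qed.

Lemma adj_src_tgt (ok : pred 'I_ne) e : ok e -> adj ok (src e) (tgt e).
Proof. by move=> oke; apply/adjP; exists e; rewrite !eqxx oke. Qed.

Lemma adj_tgt_src (ok : pred 'I_ne) e : ok e -> adj ok (tgt e) (src e).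
Proof. by move=> oke; rewrite adj_sym adj_src_tgt. Qed.

Lemma adj_mono (ok ok' : pred 'I_ne) : (forall e, ok e -> ok' e) ->
  forall x y, adj ok x y -> adj ok' x y.
Proof.
move=> H x y /adjP [e [oke He]]; apply/adjP; exists e; split => //; exact: H.
Qed.

Lemma connect_mono (ok ok' : pred 'I_ne) : (forall e, ok e -> ok' e) ->
  forall x y, connect (adj ok) x y -> connect (adj ok') x y.
Proof.
move=> H; apply: connect_sub => x y a; apply: connect1; exact: adj_mono a.
Qed.

Lemma connect_symA (ok : pred 'I_ne) x y : connect (adj ok) x y = connect (adj ok) y x.
Proof. exact: (sym_connect_sym (@adj_sym ok)). Qed.

Section Count.
Variable ok : pred 'I_ne.
Hypothesis conn : forall x y, connect (adj ok) x y.
Variable r : 'I_nv.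

Fixpoint reach (k : nat) (v : 'I_nv) : bool :=
  if k is k'.+1 then reach k' v || [exists u, adj ok u v && reach k' u]
  else v == r.

Lemma reach_mono k v : reach k v -> reach k.+1 v.
Proof. by move=> h /=; rewrite h. Qed.

Lemma reach_path x p k : path (adj ok) x p -> reach k x ->
  reach (k + size p) (last x p).
Proof.
elim: p x k => [|y p IH] x k /=; first by rewrite addn0.
case/andP => axy pp rk; rewrite addnS -addSn; apply: IH => //=.
by apply/orP; right; apply/existsP; exists x; rewrite axy rk.
Qed.

Lemma reach_ex v : exists k, reach k v.
Proof.
have := conn r v => /connectP [p pp ->]; exists (0 + size p).
by apply: reach_path => //=.
Qed.

Definition dist v := ex_minn (reach_ex v).

Lemma distP v : reach (dist v) v.
Proof. by rewrite /dist; case: ex_minnP. Qed.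

Lemma dist_min v k : reach k v -> dist v <= k.
Proof. by rewrite /dist; case: ex_minnP => m _ H /H. Qed.

Lemma dist_parent v : v != r -> exists u, adj ok u v && (dist u < dist v).
Proof.
move=> vr; have := distP v; case E: (dist v) => [|k] /=.
  by move/eqP => vr'; rewrite vr' eqxx in vr.
case/orP => [rk|]; first by have := dist_min rk; rewrite E ltnn.
case/existsP => u /andP [a ru]; exists u; rewrite a /=.
by have := dist_min ru; rewrite ltnS.
Qed.

Definition pedge_pred v := [pred e | ok e && (((src e == v) && (dist (tgt e) < dist v)) || ((tgt e == v) && (dist (src e) < dist v)))].

Lemma pedge_ex v : v != r -> exists e, pedge_pred v e.
Proof.
move=> /dist_parent [u /andP [/adjP [e [oke He]] du]]; exists e.
rewrite /= oke /=; case/orP: He => /andP [/eqP s /eqP t].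
  by rewrite t s eqxx du orbT.
by rewrite t s eqxx du.
Qed.

Definition pedge v := [pick e | pedge_pred v e].

Lemma pedge_inj : {in predC1 r &, injective pedge}.
Proof.
move=> u v; rewrite !inE => ur vr; rewrite /pedge.
case: pickP => [e He|]; last by have [e He] := pedge_ex ur => /(_ e); rewrite He.
case: pickP => [f Hf|]; last by have [f Hf] := pedge_ex vr => /(_ f); rewrite Hf.
case=> ef; subst f; move: He Hf; rewrite /= => /andP [_ He] /andP [_ Hf].
apply/eqP; apply/negPn/negP => uv.
case/orP: He => /andP [/eqP s1 d1]; case/orP: Hf => /andP [/eqP s2 d2].
- by rewrite -s1 s2 eqxx in uv.
- by rewrite s1 in d2; rewrite s2 in d1; have := ltn_trans d1 d2; rewrite ltnn.
- by rewrite s1 in d2; rewrite s2 in d1; have := ltn_trans d1 d2; rewrite ltnn.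
- by rewrite -s1 s2 eqxx in uv.
Qed.

Lemma conn_card_r : nv <= #|ok|.+1.
Proof.
have H1 : #|[set pedge v | v in predC1 r]| = #|predC1 r| by apply: card_in_imset; exact: pedge_inj.
have H2 : [set pedge v | v in predC1 r] \subset [set Some e | e in ok].
  apply/subsetP => x /imsetP [v]; rewrite inE => vr ->.
  rewrite /pedge; case: pickP => [e He|]; last by have [e He] := pedge_ex vr => /(_ e); rewrite He.
  by apply/imsetP; exists e => //; case/andP: He.
have := subset_leq_card H2; rewrite H1 card_imset; last by move=> a b [].
by rewrite cardC1 card_ord; case: (nv) => //.
Qed.
End Count.

Lemma conn_card (ok : pred 'I_ne) : (forall x y, connect (adj ok) x y) -> nv <= #|ok|.+1.
Proof.
move=> c; case: (posnP nv) => [->|n0] //.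
exact: (conn_card_r c (Ordinal n0)).
Qed.

End Graph.

End G1.
Import G1.

Module G2.

Lemma connect_pred (T : finType) (e : rel T) (a : pred T) :
  (forall x y, e x y -> a x -> a y) -> forall x y, connect e x y -> a x -> a y.
Proof.
move=> H x y /connectP [p pp ->]; elim: p x pp => [|z p IH] x //= /andP [exz pp] ax.
by apply: IH => //; apply: H ax.
Qed.

Section Transfer.
Variables (nvS neS nvT neT : nat).
Variables (srcS tgtS : 'I_neS -> 'I_nvS) (srcT tgtT : 'I_neT -> 'I_nvT).
Variables (vm : 'I_nvS -> 'I_nvT) (em : 'I_neS -> 'I_neT).
Hypothesis vm_inj : injective vm.
Hypothesis hsrc : forall g, srcT (em g) = vm (srcS g).
Hypothesis htgt : forall g, tgtT (em g) = vm (tgtS g).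
Variables (okS : pred 'I_neS) (okT : pred 'I_neT).

Lemma transfer_fwd : (forall g, okS g -> okT (em g)) ->
  forall x y, connect (adj_on srcS tgtS okS) x y ->
    connect (adj_on srcT tgtT okT) (vm x) (vm y).
Proof.
move=> hok x y /connectP [p pp ->]; elim: p x pp => [|z p IH] x /=.
  by rewrite connect0.
case/andP => /adjP [g [okg Hg]] pp; apply: connect_trans (IH _ pp).
apply: connect1; apply/adjP; exists (em g); split; first exact: hok.
by rewrite hsrc htgt !(inj_eq vm_inj).
Qed.

Variable A : pred 'I_nvT.
Hypothesis hA : forall w, A (vm w).
Hypothesis hE : forall f, okT f -> A (srcT f) -> A (tgtT f) ->
  exists g, okS g /\ em g = f.
Hypothesis hcl : forall f, okT f -> A (srcT f) = A (tgtT f).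

Lemma transfer_bwd x v : connect (adj_on srcT tgtT okT) (vm x) v ->
  exists y, vm y = v /\ connect (adj_on srcS tgtS okS) x y.
Proof.
case/connectP => p pp ->; elim: p x pp => [|z p IH] x /=.
  by move=> _; exists x; rewrite connect0.
case/andP => /adjP [f [okf Hf]] pp.
have Hz : exists y, vm y = z /\ adj_on srcS tgtS okS x y.
  case/orP: Hf => /andP [/eqP s /eqP t].
  - have As : A (srcT f) by rewrite s.
    have At : A (tgtT f) by rewrite -(hcl okf).
    have [g [okg eg]] := hE okf As At.
    exists (tgtS g); split; first by rewrite -htgt eg.
    apply/adjP; exists g; split => //.
    by apply/orP; left; apply/andP; split; apply/eqP; apply: vm_inj;
      rewrite -?hsrc -?htgt eg.
  - have At : A (tgtT f) by rewrite t.
    have As : A (srcT f) by rewrite (hcl okf).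
    have [g [okg eg]] := hE okf As At.
    exists (srcS g); split; first by rewrite -hsrc eg.
    apply/adjP; exists g; split => //.
    by apply/orP; right; apply/andP; split; apply/eqP; apply: vm_inj;
      rewrite -?hsrc -?htgt eg.
have [y [vy axy]] := Hz; subst z.
have [y' [vy' cy]] := IH y pp; exists y'; split => //.
exact: connect_trans (connect1 axy) cy.
Qed.

End Transfer.

Section TreeFacts.
Variable T : otree.
Local Notation nv := (onv T).
Local Notation ne := (Defs.one T).
Local Notation src := (@osrc T).
Local Notation tgt := (@otgt T).
Local Notation adjT := (adj_on src tgt).

Definition endp (e : 'I_ne) (b : bool) := if b then tgt e else src e.

Lemma tree_card : nv = ne.+1.
Proof. by case: T => ? ? ? ? /= /andP [/eqP]. Qed.

Lemma tree_conn x y : connect (adjT predT) x y.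
Proof. by case: T x y => ? ? ? ? /= /andP [_ /forallP H] x y; have /forallP := H x. Qed.

Lemma conn_split (ok : pred 'I_ne) f x y : connect (adjT ok) x y ->
  [\/ connect (adjT [pred g | ok g && (g != f)]) x y,
      connect (adjT [pred g | ok g && (g != f)]) x (src f) |
      connect (adjT [pred g | ok g && (g != f)]) x (tgt f)].
Proof.
case/connectP => p pp ->; elim: p x pp => [|z p IH] x /=.
  by move=> _; apply: Or31; rewrite connect0.
case/andP => /adjP [g [okg Hg]] pp.
case: (eqVneq g f) => [gf|gf].
  subst g; case/orP: Hg => /andP [/eqP s /eqP t].
  - by apply: Or32; rewrite s connect0.
  - by apply: Or33; rewrite t connect0.
have a : adjT [pred g | ok g && (g != f)] x z by apply/adjP; exists g; rewrite /= okg gf.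
case: (IH z pp) => c; [apply: Or31 | apply: Or32 | apply: Or33];
  exact: connect_trans (connect1 a) c.
Qed.

Variable e : 'I_ne.
Local Notation pv b := (piece_v e b).

Lemma pv_end b : pv b (endp e b).
Proof. by rewrite /piece_v; case: b; apply: connect0. Qed.

Lemma pv_trans b x y : pv b x -> connect (adjT (predC1 e)) x y -> pv b y.
Proof. by rewrite /piece_v => h1 h2; apply: connect_trans h1 h2. Qed.

Lemma pv_cl b f : f != e -> pv b (src f) = pv b (tgt f).
Proof.
move=> fe; apply/idP/idP => h; apply: pv_trans h _; apply: connect1.
  by apply: adj_src_tgt.
by apply: adj_tgt_src.
Qed.

Lemma pv_cover v : pv true v || pv false v.
Proof.
have H := @connect_pred _ (adjT predT) [pred v | pv true v || pv false v].
apply: (H _ (tgt e)); last by rewrite /= (pv_end true).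
  move=> x y /adjP [g [_ Hg]] /= hx.
  case: (eqVneq g e) => [ge|ge]; first subst g.
    case/orP: Hg => /andP [/eqP s /eqP t].
      by rewrite -t (pv_end true).
    by rewrite -s (pv_end false) orbT.
  case/orP: Hg => /andP [/eqP s /eqP t]; rewrite -?s -?t in hx *.
    by rewrite -!pv_cl.
  by rewrite !pv_cl.
exact: tree_conn.
Qed.

Lemma pv_disj v : ~~ (pv true v && pv false v).
Proof.
apply/negP => /andP [h1 h2].
have c : connect (adjT (predC1 e)) (tgt e) (src e).
  by apply: connect_trans h1 _; rewrite connect_symA.
have all : forall x y, connect (adjT (predC1 e)) x y.
  have hx : forall x, connect (adjT (predC1 e)) (tgt e) x.
    move=> x; case/orP: (pv_cover x) => // hx.
    exact: connect_trans c hx.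
  by move=> x y; apply: connect_trans (hx y); rewrite connect_symA.
have := conn_card all; rewrite cardC1 card_ord tree_card.
have : 0 < ne by apply: leq_ltn_trans (ltn_ord e).
by case: (ne) => // n _; rewrite /= ltnn.
Qed.

Lemma pv_e_not b : ~~ (pv b (src e) && pv b (tgt e)).
Proof.
case: b; apply/negP => /andP [h1 h2].
  by have := pv_disj (src e); rewrite h1 (pv_end false).
by have := pv_disj (tgt e); rewrite h2 (pv_end true).
Qed.

Lemma pv_neg b v : pv b v -> ~~ pv (~~ b) v.
Proof. by case: b => h; have := pv_disj v; rewrite h // andbT. Qed.

Lemma pv_negb b v : ~~ pv b v -> pv (~~ b) v.
Proof. by case: b => h; have := pv_cover v; rewrite (negbTE h) // orbF. Qed.

Section Piece.
Variable b : bool.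
Definition Pset : {pred 'I_nv} := [pred v | pv b v].
Definition Eset : {pred 'I_ne} := [pred f | (f != e) && pv b (src f) && pv b (tgt f)].
Lemma Pbase : endp e b \in Pset. Proof. exact: pv_end. Qed.

Definition pvm : 'I_#|Pset| -> 'I_nv := @enum_val _ Pset.
Definition pem : 'I_#|Eset| -> 'I_ne := @enum_val _ Eset.
Definition psrc (g : 'I_#|Eset|) : 'I_#|Pset| := enum_rank_in Pbase (src (pem g)).
Definition ptgt (g : 'I_#|Eset|) : 'I_#|Pset| := enum_rank_in Pbase (tgt (pem g)).

Lemma psrcE g : src (pem g) = pvm (psrc g).
Proof.
rewrite /psrc /pvm enum_rankK_in //; have := enum_valP g.
by rewrite !inE => /andP [/andP [_ ->]].
Qed.

Lemma ptgtE g : tgt (pem g) = pvm (ptgt g).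
Proof.
rewrite /ptgt /pvm enum_rankK_in //; have := enum_valP g.
by rewrite !inE => /andP [_ ->].
Qed.

Lemma piece_conn_base z : connect (adj_on psrc ptgt predT) (enum_rank_in Pbase (endp e b)) z.
Proof.
have hv : connect (adjT (predC1 e)) (pvm (enum_rank_in Pbase (endp e b))) (pvm z).
  rewrite /pvm enum_rankK_in ?Pbase //; have := (@enum_valP _ Pset z); rewrite inE /piece_v.
  by case: (b).
have := @transfer_bwd _ _ _ _ psrc ptgt src tgt pvm pem (@enum_val_inj _ Pset)
   psrcE ptgtE predT (predC1 e) Pset _ _ _ _ _ hv.
case => [w|f fe As At|f fe|y [/(@enum_val_inj _ Pset) <- //]].
- exact: (@enum_valP _ Pset).
- have Hf : f \in Eset.
    by rewrite inE /=; move: As At fe; rewrite /Pset /= => -> -> ->.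
  exists (enum_rank_in Hf f); split => //; exact: enum_rankK_in.
- by rewrite /Pset /= (pv_cl _ fe).
Qed.

Lemma piece_conn x y : connect (adj_on psrc ptgt predT) x y.
Proof.
by apply: connect_trans (piece_conn_base y); rewrite connect_symA piece_conn_base.
Qed.

Lemma piece_le : #|Pset| <= #|Eset|.+1.
Proof.
by have := conn_card piece_conn; rewrite cardT size_enum_ord.
Qed.

End Piece.
Lemma sumP : #|Pset true| + #|Pset false| = nv.
Proof.
rewrite -cardUI (@eq_card0 _ [predI _ & _]) ?addn0.
  by rewrite -[RHS]card_ord; apply: eq_card => v; rewrite !inE /= pv_cover.
by move=> v; rewrite !inE /=; apply/negbTE/pv_disj.
Qed.

Lemma sumE : #|Eset true| + #|Eset false| = ne.-1.
Proof.
rewrite -cardUI (@eq_card0 _ [predI _ & _]) ?addn0.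
  have -> : ne.-1 = #|predC1 e| by rewrite cardC1 card_ord.
  apply: eq_card => f; rewrite !inE /=.
  case: (eqVneq f e) => //= fe; rewrite -!(pv_cl _ fe) !andbb; exact: pv_cover.
move=> f; rewrite !inE /=; case: (f != e) => //=; rewrite -!andbA.
apply/negbTE/negP => /and4P [h1 _ h2 _]; have := pv_disj (src f); by rewrite h1 h2.
Qed.

Lemma piece_card b : #|Pset b| = #|Eset b|.+1.
Proof.
have h1 := piece_le true; have h2 := piece_le false; have h3 := sumP; have h4 := sumE.
have h5 : 0 < ne by apply: leq_ltn_trans (ltn_ord e).
have h6 := tree_card; case: b;
move: (#|Pset true|) (#|Pset false|) h1 h2 h3 => a c h1 h2 h3; rewrite h6 in h3; lia.
Qed.

End TreeFacts.

End G2.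
Import G2.

Module G3.

Section PieceTree.
Variables (T : otree) (e : 'I_(Defs.one T)) (b : bool).

Lemma piece_is_tree : is_tree (@psrc T e b) (@ptgt T e b).
Proof.
apply/andP; split; first by rewrite piece_card.
by apply/forallP => x; apply/forallP => y; apply: piece_conn.
Qed.

Definition piece_tree : otree := OTree piece_is_tree.

Definition piece_emb : emb piece_tree T :=
  @Emb piece_tree T (@pvm T e b) (@pem T e b) (@enum_val_inj _ _) (@enum_val_inj _ _)
    (@psrcE T e b) (@ptgtE T e b).

Lemma piece_emb_is_piece : is_piece e b piece_emb.
Proof.
split.
  move=> v; split => [h|[w <-]]; last exact: (@enum_valP _ (Pset e b)).
  have hv : v \in Pset e b by [].
  by exists (enum_rank_in hv v); rewrite /= /pvm enum_rankK_in.
move=> f; split => [h|[g <-]]; last first.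
  exact: (@enum_valP _ (Eset e b) g).
have hf : f \in Eset e b by [].  
by exists (enum_rank_in hf f); rewrite /= /pem enum_rankK_in.
Qed.
End PieceTree.

Lemma emb_eq (S T : otree) (f g : emb S T) :
  emb_v f =1 emb_v g -> emb_e f =1 emb_e g -> f = g.
Proof.
case: f => fv fe fvi fei fs ft; case: g => gv ge gvi gei gs gt /= hv he.
have ev : fv = gv by apply: functional_extensionality.
have ee : fe = ge by apply: functional_extensionality.
subst gv ge.
by rewrite (proof_irrelevance _ fvi gvi) (proof_irrelevance _ fei gei)
  (proof_irrelevance _ fs gs) (proof_irrelevance _ ft gt).
Qed.

Definition induced (S T : otree) (i : emb S T) (A : pred 'I_(onv T)) : Prop :=
  (forall v, A v <-> exists w, emb_v i w = v) /\
  (forall f, A (osrc f) && A (otgt f) <-> exists g, emb_e i g = f).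

Lemma induced_ext S T (i : emb S T) (A A' : pred 'I_(onv T)) :
  A =1 A' -> induced i A -> induced i A'.
Proof.
by move=> E [h1 h2]; split => [v|f]; [rewrite -E; apply: h1 | rewrite -!E; apply: h2].
Qed.

Lemma induced_in S T (i : emb S T) A w : induced i A -> A (emb_v i w).
Proof. by case=> h _; apply/h; exists w. Qed.

Lemma is_piece_induced T e b S (i : emb S T) :
  is_piece e b i -> induced i (piece_v e b).
Proof.
case=> h1 h2; split => // f; rewrite -h2; case: (eqVneq f e) => [fe|fe] //=.
subst f; split => // h; have := pv_e_not e b; by rewrite h.
Qed.

Lemma bij_induced S T (j : emb S T) :
  bijective (emb_v j) -> bijective (emb_e j) -> induced j predT.
Proof.
case=> gv _ hv; case=> ge _ he; split.
  by move=> v; split => // _; exists (gv v).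
by move=> f; split => // _; exists (ge f).
Qed.

Definition img (S T : otree) (i : emb S T) (B : pred 'I_(onv S)) : pred 'I_(onv T) :=
  fun v => [exists w, (emb_v i w == v) && B w].

Lemma induced_comp (S1 S T : otree) (i : emb S T) (j : emb S1 S) A B :
  induced i A -> induced j B -> induced (emb_comp i j) (img i B).
Proof.
move=> [iv ie] [jv je]; split => [v|f].
  split.
    case/existsP => w /andP [/eqP <- Bw].
    by have [w' <-] := (jv w).1 Bw; exists w'.
  case=> w' <-; apply/existsP; exists (emb_v j w'); rewrite /= eqxx /=.
  by apply/jv; exists w'.
split.
  case/andP => /existsP [w1 /andP [/eqP e1 B1]] /existsP [w2 /andP [/eqP e2 B2]].
  have hA : A (osrc f) && A (otgt f).
    by rewrite -e1 -e2; apply/andP; split; apply/iv; [exists w1 | exists w2].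
  have [g eg] := (ie f).1 hA.
  have s1 : osrc g = w1 by apply: (@emb_v_inj _ _ i); rewrite -emb_src eg.
  have s2 : otgt g = w2 by apply: (@emb_v_inj _ _ i); rewrite -emb_tgt eg.
  have [h eh] : exists h, emb_e j h = g by apply/je; rewrite s1 s2 B1 B2.
  by exists h; rewrite /= eh.
case=> h <-; apply/andP; split; apply/existsP.
  exists (emb_v j (osrc h)); rewrite /= !emb_src eqxx /=; apply/jv; by exists (osrc h).
exists (emb_v j (otgt h)); rewrite /= !emb_tgt eqxx /=; apply/jv; by exists (otgt h).
Qed.

Lemma sig_eq (A : Type) (P : A -> Prop) (a b : A) (p : P a) (q : P b) :
  a = b -> exist P a p = exist P b q.
Proof. move=> E; subst b; by rewrite (proof_irrelevance _ p q). Qed.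

Section Homeo.
Variable psi : otree_structure.
Local Notation cls := (@cls psi).
Local Notation homeo := (@homeo psi).

Definition ptree (T : otree) (t : psi_obj psi T) : psitree psi := existT _ T t.

Lemma homeo_refl x : homeo x x.
Proof.
exists (emb_id _); split; try exact: inj_bij; try by exists id.
exact: psi_id.
Qed.

Lemma homeo_sym x y : homeo x y -> homeo y x.
Proof.
case: x y => [Tx tx] [Ty ty] [j [[gv gv1 gv2] [ge ge1 ge2] hj]] /=; move: hj => /= hj.
have hs : forall f, osrc (ge f) = gv (osrc f).
  move=> f; apply: (@emb_v_inj _ _ j); by rewrite -emb_src ge2 gv2.
have ht : forall f, otgt (ge f) = gv (otgt f).
  move=> f; apply: (@emb_v_inj _ _ j); by rewrite -emb_tgt ge2 gv2.
pose j' := @Emb Ty Tx gv ge (can_inj gv2) (can_inj ge2) hs ht.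
exists j'; split; [by exists (emb_v j) | by exists (emb_e j) |] => /=.
rewrite -hj -psi_comp (_ : emb_comp j j' = emb_id Ty) ?psi_id //.
by apply: emb_eq => v /=; rewrite ?gv2 ?ge2.
Qed.

Lemma homeo_trans x y z : homeo x y -> homeo y z -> homeo x z.
Proof.
case: x y z => [Tx tx] [Ty ty] [Tz tz] [j1 [b1 b1' h1]] [j2 [b2 b2' h2]] /=.
move: h1 h2 => /= h1 h2.
exists (emb_comp j2 j1); split; try exact: bij_comp.
by rewrite psi_comp h2 h1.
Qed.

Lemma cls_homeo x y : homeo x y -> cls x = cls y.
Proof.
move=> h; have E : homeo x = homeo y.
  apply: functional_extensionality => z; apply: propositional_extensionality.
  split => h'; [exact: homeo_trans (homeo_sym h) h' | exact: homeo_trans h h'].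
exact: sig_eq.
Qed.

Lemma cls_inv x y : cls x = cls y -> homeo x y.
Proof.
move=> /(congr1 sval) /= E; rewrite E; exact: homeo_refl.
Qed.

Lemma cls_surj (c : hclass psi) : exists x, cls x = c.
Proof.
case: c => P [x ex]; exists x; exact: sig_eq.
Qed.

Lemma induced_unique T (t : psi_obj psi T) S (i : emb S T) S' (i' : emb S' T) A A' :
  induced i A -> induced i' A' -> A =1 A' ->
  cls (ptree (psi_map i t)) = cls (ptree (psi_map i' t)).
Proof.
move=> hi hi' E; move: (induced_ext E hi) => {hi} hi.
case: hi hi' => [iv ie] [iv' ie'].
have exv : forall w, exists w', emb_v i' w' == emb_v i w.
  move=> w; have /iv' [w' ew] : A' (emb_v i w) by apply/iv; exists w.
  by exists w'; rewrite ew.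
have exe : forall g, exists g', emb_e i' g' == emb_e i g.
  move=> g; have /ie' [g' eg] : A' (osrc (emb_e i g)) && A' (otgt (emb_e i g)).
    by apply/ie; exists g.
  by exists g'; rewrite eg.
have exv' : forall w', exists w, emb_v i w == emb_v i' w'.
  move=> w; have /iv [w' ew] : A' (emb_v i' w) by apply/iv'; exists w.
  by exists w'; rewrite ew.
have exe' : forall g', exists g, emb_e i g == emb_e i' g'.
  move=> g; have /ie [g' eg] : A' (osrc (emb_e i' g)) && A' (otgt (emb_e i' g)).
    by apply/ie'; exists g.
  by exists g'; rewrite eg.
pose jv w := xchoose (exv w).
pose je g := xchoose (exe g).
pose kv w := xchoose (exv' w).
pose ke g := xchoose (exe' g).
have jvE : forall w, emb_v i' (jv w) = emb_v i w by move=> w; apply/eqP; exact: (xchooseP (exv w)).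
have jeE : forall g, emb_e i' (je g) = emb_e i g by move=> g; apply/eqP; exact: (xchooseP (exe g)).
have kvE : forall w, emb_v i (kv w) = emb_v i' w by move=> w; apply/eqP; exact: (xchooseP (exv' w)).
have keE : forall g, emb_e i (ke g) = emb_e i' g by move=> g; apply/eqP; exact: (xchooseP (exe' g)).
have jvK : cancel jv kv by move=> w; apply: (@emb_v_inj _ _ i); rewrite kvE jvE.
have kvK : cancel kv jv by move=> w; apply: (@emb_v_inj _ _ i'); rewrite jvE kvE.
have jeK : cancel je ke by move=> w; apply: (@emb_e_inj _ _ i); rewrite keE jeE.
have keK : cancel ke je by move=> w; apply: (@emb_e_inj _ _ i'); rewrite jeE keE.
have hs : forall g, osrc (je g) = jv (osrc g).
  by move=> g; apply: (@emb_v_inj _ _ i'); rewrite -emb_src jvE jeE emb_src.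
have ht : forall g, otgt (je g) = jv (otgt g).
  by move=> g; apply: (@emb_v_inj _ _ i'); rewrite -emb_tgt jvE jeE emb_tgt.
pose j := @Emb S S' jv je (can_inj jvK) (can_inj jeK) hs ht.
apply: cls_homeo; exists j; split; [by exists kv | by exists ke |] => /=.
rewrite -psi_comp; congr (psi_map _ t); by apply: emb_eq => x /=.
Qed.

End Homeo.

End G3.
Import G3.

Module G4.
Import GRing.Theory.
Local Open Scope ring_scope.

Section BijPieces.
Variables (T T' : otree) (j : emb T T').
Hypotheses (bv : bijective (emb_v j)) (be : bijective (emb_e j)).

Lemma endp_bij e b : emb_v j (endp e b) = endp (emb_e j e) b.
Proof. by case: b; rewrite /endp ?emb_src ?emb_tgt. Qed.

Lemma pv_bij e b v : piece_v (emb_e j e) b (emb_v j v) = piece_v e b v.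
Proof.
have E1 : piece_v e b v = connect (adj_on (@osrc T) (@otgt T) (predC1 e)) (endp e b) v.
  by rewrite /piece_v /endp; case: (b).
have E2 : piece_v (emb_e j e) b (emb_v j v) =
   connect (adj_on (@osrc T') (@otgt T') (predC1 (emb_e j e))) (emb_v j (endp e b)) (emb_v j v).
  by rewrite endp_bij /piece_v /endp; case: (b).
rewrite E1 E2; apply/idP/idP => h.
  case: be => ge ge1 ge2.
  have hE : forall f, predC1 (emb_e j e) f -> predT (osrc f) -> predT (otgt f) ->
      exists g, predC1 e g /\ emb_e j g = f.
    move=> f fe _ _; exists (ge f); split; last by rewrite ge2.
    by apply: contra fe => /eqP <-; rewrite ge2.
  have [y [/(@emb_v_inj _ _ j) <- //]] := @transfer_bwd _ _ _ _ _ _ _ _ (emb_v j) (emb_e j)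
     (@emb_v_inj _ _ j) (@emb_src _ _ j) (@emb_tgt _ _ j) (predC1 e) (predC1 (emb_e j e))
     predT (fun _ => erefl) hE (fun _ _ => erefl) _ _ h.
apply: (transfer_fwd (@emb_v_inj _ _ j) (@emb_src _ _ j) (@emb_tgt _ _ j) _ h).
by move=> g ge; rewrite /= (inj_eq (@emb_e_inj _ _ j)).
Qed.

Lemma img_bij_pv e b : img j (piece_v e b) =1 piece_v (emb_e j e) b.
Proof.
move=> v; case: bv => gv gv1 gv2; rewrite /img.
apply/existsP/idP => [[w /andP [/eqP <-]]|h]; first by rewrite pv_bij.
by exists (gv v); rewrite gv2 eqxx /= -pv_bij gv2.
Qed.
End BijPieces.

Section Nu.
Variables (R : comNzRingType) (psi : otree_structure).
Local Notation K := (hclass psi).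
Local Notation F2 := (F2 R K).

Definition D2 (a b : K) : F2 := << (a, b) >> - << (b, a) >>.

Lemma nu_edge_eq T (t : psi_obj psi T) e S1 (i1 : emb S1 T) S2 (i2 : emb S2 T) :
  induced i1 (piece_v e true) -> induced i2 (piece_v e false) ->
  nu_edge R t e = D2 (cls (ptree (psi_map i1 t))) (cls (ptree (psi_map i2 t))).
Proof.
move=> h1 h2; rewrite /nu_edge.
set P := fun z : Defs.F2 R K => _.
have ex : exists z, P z.
  eexists; exists (piece_tree e true), (piece_emb e true), (piece_tree e false), (piece_emb e false).
  split; [exact: piece_emb_is_piece | exact: piece_emb_is_piece | reflexivity].
have := epsilon_spec (inhabits 0) P ex.
case=> S1' [i1' [S2' [i2' [p1 p2 /= ->]]]].
rewrite /D2 (induced_unique t (is_piece_induced p1) h1 (frefl _)).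
by rewrite (induced_unique t (is_piece_induced p2) h2 (frefl _)).
Qed.

Definition kap T (t : psi_obj psi T) (A : pred 'I_(onv T)) : K :=
  epsilon (inhabits (cls (ptree t)))
    (fun c => exists S (i : emb S T), induced i A /\ c = cls (ptree (psi_map i t))).

Lemma kap_eq T (t : psi_obj psi T) A S (i : emb S T) :
  induced i A -> kap t A = cls (ptree (psi_map i t)).
Proof.
move=> h; rewrite /kap; set P := fun c => _.
have ex : exists c, P c by exists (cls (ptree (psi_map i t))), S, i.
have := epsilon_spec (inhabits (cls (ptree t))) P ex.
case=> S' [i' [h' ->]]; exact: (induced_unique t h' h (frefl _)).
Qed.

Lemma kap_ext T (t : psi_obj psi T) A A' S (i : emb S T) :
  induced i A -> A =1 A' -> kap t A = kap t A'.
Proof.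
by move=> h E; rewrite (kap_eq t h) (kap_eq t (induced_ext E h)).
Qed.

Lemma nu_edge_kap T (t : psi_obj psi T) e :
  nu_edge R t e = D2 (kap t (piece_v e true)) (kap t (piece_v e false)).
Proof.
have h1 := is_piece_induced (piece_emb_is_piece e true).
have h2 := is_piece_induced (piece_emb_is_piece e false).
by rewrite (nu_edge_eq t h1 h2) -(kap_eq t h1) -(kap_eq t h2).
Qed.

Lemma nu_edge_homeo T T' (j : emb T T') (t : psi_obj psi T) (t' : psi_obj psi T') e :
  bijective (emb_v j) -> bijective (emb_e j) -> psi_map j t' = t ->
  nu_edge R t' (emb_e j e) = nu_edge R t e.
Proof.
move=> bv be ht.
have h1 := is_piece_induced (piece_emb_is_piece e true).
have h2 := is_piece_induced (piece_emb_is_piece e false).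
have h1' := induced_ext (img_bij_pv bv be e true) (induced_comp (bij_induced bv be) h1).
have h2' := induced_ext (img_bij_pv bv be e false) (induced_comp (bij_induced bv be) h2).
by rewrite (nu_edge_eq t h1 h2) (nu_edge_eq t' h1' h2') !psi_comp ht.
Qed.

Lemma nu0_gen_cls T (t : psi_obj psi T) :
  nu0_gen R (cls (ptree t)) = \sum_(e < Defs.one T) nu_edge R t e.
Proof.
rewrite /nu0_gen; set P := fun z => _.
have ex : exists z, P z by eexists; exists T, t; split.
have := epsilon_spec (inhabits 0) P ex.
case=> T' [t' [/cls_inv/homeo_sym [j [bv be /= ht]] ->]].
rewrite (reindex (emb_e j)) /=; last exact: onW_bij.
by apply: eq_bigr => e _; apply: nu_edge_homeo.
Qed.

Lemma nu0_gen_kap T (t : psi_obj psi T) :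
  nu0_gen R (cls (ptree t)) =
  \sum_(e < Defs.one T) D2 (kap t (piece_v e true)) (kap t (piece_v e false)).
Proof. by rewrite nu0_gen_cls; apply: eq_bigr => e _; apply: nu_edge_kap. Qed.

End Nu.

End G4.
Import G4.

Module G5.
Import GRing.Theory.
Local Open Scope ring_scope.

Section Alg.
Variables (R : comNzRingType) (K : choiceType).

Section FL.
Variables (J : choiceType) (M : lmodType R) (f : J -> M).

Lemma fgD (u v : {freeg J / R}) : fglift f (u + v) = fglift f u + fglift f v.
Proof.
have h := lift_is_additive f.
have h0 : fglift f 0 = 0.
  by have := h 0 0; rewrite subrr => ->; rewrite subrr.
have hN : forall w, fglift f (- w) = - fglift f w.
  by move=> w; have := h 0 w; rewrite sub0r h0 sub0r.
by have := h u (- v); rewrite opprK hN opprK.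
Qed.

Lemma fgB (u v : {freeg J / R}) : fglift f (u - v) = fglift f u - fglift f v.
Proof. exact: lift_is_additive. Qed.

Lemma fg0 : fglift f 0 = 0.
Proof. by have := fgB 0 0; rewrite subrr => ->; rewrite subrr. Qed.

Lemma fgN (u : {freeg J / R}) : fglift f (- u) = - fglift f u.
Proof. by have := fgB 0 u; rewrite sub0r fg0 sub0r. Qed.

Lemma fg_sum (I : Type) (r : seq I) (P : pred I) (F : I -> {freeg J / R}) :
  fglift f (\sum_(i <- r | P i) F i) = \sum_(i <- r | P i) fglift f (F i).
Proof.
elim: r => [|i r IH]; first by rewrite !big_nil fg0.
by rewrite !big_cons; case: (P i); rewrite ?fgD IH.
Qed.

Lemma fgU (k : R) (x : J) : fglift f << k *g x >> = k *: f x.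
Proof. exact: liftU. Qed.

Lemma fgU1 (x : J) : fglift f << x >> = f x.
Proof. by rewrite fgU scale1r. Qed.

Lemma fgZ (a : R) (u : {freeg J / R}) : fglift f (a *: u) = a *: fglift f u.
Proof.
rewrite -{2}(freeg_sumE u) fg_sum scaler_sumr.
have -> : a *: u = fgscale a u by [].
rewrite /fgscale fg_sum; apply: eq_bigr => z _.
by rewrite !fgU scalerA.
Qed.

End FL.

Lemma freeg_zero (J : choiceType) (M : zmodType) (G : {freeg J / R} -> M) :
  (forall x y, G (x + y) = G x + G y) -> (forall k z, G << k *g z >> = 0) ->
  forall x, G x = 0.
Proof.
move=> hD hU x.
have h0 : G 0 = 0.
  by have := hD 0 0; rewrite addr0 => h; apply: (@addrI _ (G 0)); rewrite addr0 -h.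
rewrite -(freeg_sumE x); elim: (dom x) => [|z s IH]; first by rewrite big_nil.
by rewrite big_cons hD IH hU addr0.
Qed.

Lemma six (V : zmodType) (x1 x2 x3 x4 x5 x6 : V) :
  (x1 - x2 + (x3 - x4)) + ((x5 - x3) + (x6 - x1)) + ((x4 - x6) + (x2 - x5)) = 0.
Proof.
rewrite !addrA (ACl ((1*8)*(11*2)*(3*6)*(9*4)*(5*12)*(7*10)))%AC /=.
by rewrite !subrr !addr0.
Qed.

Definition D3 (a b c : K) : F3 R K := << (a, b, c) >> - << (a, c, b) >>.
Lemma D3_swap a b c : D3 a b c = - D3 a c b.
Proof. by rewrite /D3 opprB. Qed.

Definition cyc (w : F3 R K) := w + ttau w + ttau (ttau w).

Lemma ttauU a b c : ttau << (a, b, c) >> = << (c, a, b) >> :> F3 R K.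
Proof. by rewrite /ttau fgU1. Qed.

Lemma cycD u v : cyc (u + v) = cyc u + cyc v.
Proof.
rewrite /cyc /ttau !fgD.
rewrite !addrA (ACl (1*3*5*2*4*6))%AC /=.
by [].
Qed.

Lemma cyc0 : cyc 0 = 0.
Proof. by rewrite /cyc /ttau !fg0 !addr0. Qed.

Lemma cycN u : cyc (- u) = - cyc u.
Proof. by rewrite /cyc /ttau !fgN !opprD. Qed.

Lemma cyc_sum (I : Type) (r : seq I) (P : pred I) (F : I -> F3 R K) :
  cyc (\sum_(i <- r | P i) F i) = \sum_(i <- r | P i) cyc (F i).
Proof.
elim: r => [|i r IH]; first by rewrite !big_nil cyc0.
by rewrite !big_cons; case: (P i); rewrite ?cycD IH.
Qed.

Lemma cyc_pair a b m : cyc (D3 a b m + D3 b a m) = 0.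
Proof.
rewrite /cyc /D3 /ttau !(fgD, fgN, fgU1) /=.
exact: six.
Qed.

Lemma tpermU a b : tperm << (a, b) >> = << (b, a) >> :> F2 R K.
Proof. by rewrite /tperm fgU1. Qed.

Lemma tperm_D2 a b : tperm (<< (a, b) >> - << (b, a) >>) = - (<< (a, b) >> - << (b, a) >>) :> F2 R K.
Proof. by rewrite /tperm fgB !fgU1 opprB. Qed.

Lemma id_tensorU (nu : F1 R K -> F2 R K) a b :
  id_tensor nu << (a, b) >> = fglift (fun q : K * K => << (a, q.1, q.2) >> : F3 R K) (nu << b >>).
Proof. by rewrite /id_tensor fgU1. Qed.

Lemma L_D2 a b c :
  fglift (fun q : K * K => << (a, q.1, q.2) >> : F3 R K) (<< (b, c) >> - << (c, b) >>) = D3 a b c.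
Proof. by rewrite fgB !fgU1. Qed.

End Alg.

End G5.
Import G5.

Module G6.

Lemma adj_eq nv ne (src tgt : 'I_ne -> 'I_nv) (ok1 ok2 : pred 'I_ne) :
  ok1 =1 ok2 -> adj_on src tgt ok1 =2 adj_on src tgt ok2.
Proof.
move=> E x y; apply/idP/idP; apply: adj_mono => g; by rewrite E.
Qed.

Lemma endp_emb S T (i : emb S T) g b : emb_v i (endp g b) = endp (emb_e i g) b.
Proof. by case: b; rewrite /endp ?emb_src ?emb_tgt. Qed.

Lemma pvE (T : otree) (e : 'I_(Defs.one T)) b v :
  piece_v e b v = connect (adj_on (@osrc T) (@otgt T) (predC1 e)) (endp e b) v.
Proof. by rewrite /piece_v /endp; case: b. Qed.

Section Geo.
Variable T : otree.
Local Notation nv := (onv T).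
Local Notation ne := (Defs.one T).
Local Notation src := (@osrc T).
Local Notation tgt := (@otgt T).
Local Notation adjT := (adj_on src tgt).

Definition Cok (e f : 'I_ne) : pred 'I_ne := [pred g | (g != e) && (g != f)].
Definition C (e f : 'I_ne) (x : 'I_nv) : pred 'I_nv := connect (adjT (Cok e f)) x.

Lemma C_sym e f x : C e f x =1 C f e x.
Proof.
apply: eq_connect; apply: adj_eq => g; by rewrite /Cok /= andbC.
Qed.

Lemma C_same e f x y : C e f x y -> C e f x =1 C e f y.
Proof.
move=> h v; apply/idP/idP => h'.
  by apply: connect_trans h'; rewrite /C connect_symA.
exact: connect_trans h h'.
Qed.


Lemma side e f b : f != e -> ~~ piece_v e b (src f) -> piece_v e b =1 C e f (endp e b).
Proof.
move=> fe nf v; rewrite pvE; apply/idP/idP => h; last first.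
  by apply: connect_mono h => g /andP [].
case: (conn_split f h) => h'; first exact: h'.
  by move: nf; rewrite pvE (connect_mono _ h') // => g /andP [].
by move: nf; rewrite (pv_cl b fe) pvE (connect_mono _ h') // => g /andP [].
Qed.

Lemma near e f b' u : e != f -> connect (adjT (predC1 e)) u (endp f b') ->
  piece_v f b' u -> C e f u (endp f b').
Proof.
move=> ef h hu.
have H : forall b'', connect (adjT [pred g | predC1 e g && (g != f)]) u (endp f b'') ->
     C e f u (endp f b').
  move=> b'' c; case: (eqVneq b'' b') => [<- //|nb].
  have : piece_v f b'' u.
    rewrite pvE connect_symA; apply: connect_mono c => g /andP [_].
    by rewrite /= eq_sym.
  have -> : b'' = ~~ b' by move: nb; case: (b') (b'') => [] [].
  by move/negP: (pv_neg hu).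
case: (conn_split f h) => h'; first exact: h'.
  exact: (H false).
exact: (H true).
Qed.

Lemma img_sub e b S (i : emb S T) (hi : induced i (piece_v e b)) f' b' :
  img i (piece_v f' b') =1 C e (emb_e i f') (endp (emb_e i f') b').
Proof.
have ie : forall g, emb_e i g != e.
  move=> g; apply/negP => /eqP ge.
  have : piece_v e b (src e) && piece_v e b (tgt e) by apply/hi.2; exists g.
  by move/negP: (pv_e_not e b).
have hok : forall g, predC1 f' g -> Cok e (emb_e i f') (emb_e i g).
  by move=> g gf; rewrite /Cok /= ie (inj_eq (@emb_e_inj _ _ i)).
move=> v; rewrite /img; apply/existsP/idP.
  case=> w /andP [/eqP <- hw]; rewrite /C -endp_emb.
  rewrite pvE in hw.
  exact: (transfer_fwd (@emb_v_inj _ _ i) (@emb_src _ _ i) (@emb_tgt _ _ i) hok hw).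
rewrite /C -endp_emb => h.
have hE : forall g, Cok e (emb_e i f') g -> piece_v e b (src g) -> piece_v e b (tgt g) ->
    exists g', predC1 f' g' /\ emb_e i g' = g.
  move=> g /andP [ge gf] h1 h2.
  have [g' eg] : exists g', emb_e i g' = g by apply/(hi.2 g); rewrite h1 h2.
  by exists g'; split => //=; apply: contra gf => /eqP <-; rewrite eg.
have hcl : forall g, Cok e (emb_e i f') g -> piece_v e b (src g) = piece_v e b (tgt g).
  by move=> g /andP [ge _]; apply: pv_cl.
have [y [<- hy]] := transfer_bwd (@emb_v_inj _ _ i) (@emb_src _ _ i) (@emb_tgt _ _ i)
   (fun w => induced_in w hi) hE hcl h.
by exists y; rewrite eqxx /= pvE.
Qed.

Lemma C_induced e f x : e != f -> exists S (i : emb S T), induced i (C e f x).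
Proof.
move=> ef; have fe : f != e by rewrite eq_sym.
have [b hb] : exists b, piece_v e b x.
  by case/orP: (pv_cover e x) => h; [exists true | exists false].
have hi := is_piece_induced (piece_emb_is_piece e b).
case: (boolP (piece_v e b (src f))) => hf; last first.
  exists (piece_tree e b), (piece_emb e b); apply: induced_ext hi => v.
  rewrite (side fe hf); apply: C_same.
  by rewrite -(side fe hf).
have hf' : f \in Eset e b by rewrite inE /= fe hf -(pv_cl b fe) hf.
have hx : x \in Pset e b by [].
pose f' : 'I_(Defs.one (piece_tree e b)) := enum_rank_in hf' f.
pose w : 'I_(onv (piece_tree e b)) := enum_rank_in hx x.
have ef' : emb_e (piece_emb e b) f' = f by rewrite /= /pem enum_rankK_in.
have ew : emb_v (piece_emb e b) w = x by rewrite /= /pvm enum_rankK_in.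
have [b'' hb''] : exists b'', piece_v f' b'' w.
  by case/orP: (pv_cover f' w) => h; [exists true | exists false].
have hj := is_piece_induced (piece_emb_is_piece f' b'').
exists (piece_tree f' b''), (emb_comp (piece_emb e b) (piece_emb f' b'')).
apply: induced_ext (induced_comp hi hj) => v.
rewrite (img_sub hi) ef'; apply: C_same.
rewrite -ef' -(img_sub hi); apply/existsP; exists w; by rewrite ew eqxx.
Qed.

End Geo.

End G6.
Import G6.

Module G7.
Import GRing.Theory.
Local Open Scope ring_scope.

Section Main.
Variables (R : comNzRingType) (psi : otree_structure).
Local Notation K := (hclass psi).

Section Tr.
Variables (T : otree) (t : psi_obj psi T).

Lemma kapC_ext e f x A : e != f -> C e f x =1 A -> kap t (C e f x) = kap t A.
Proof. by move=> ef E; have [S [i hi]] := C_induced x ef; apply: kap_ext hi E. Qed.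

Lemma kapC_sym e f x : e != f -> kap t (C f e x) = kap t (C e f x).
Proof. by move=> ef; apply: kapC_ext; [rewrite eq_sym | apply: C_sym]. Qed.

Lemma kap_sub e b (f' : 'I_(Defs.one (piece_tree e b))) b' :
  kap (psi_map (piece_emb e b) t) (piece_v f' b') =
  kap t (C e (emb_e (piece_emb e b) f') (endp (emb_e (piece_emb e b) f') b')).
Proof.
have hi := is_piece_induced (piece_emb_is_piece e b).
have hj := is_piece_induced (piece_emb_is_piece f' b').
rewrite (kap_eq _ hj) -psi_comp -(kap_eq t (induced_comp hi hj)).
exact: kap_ext (induced_comp hi hj) (img_sub hi f' b').
Qed.

Lemma nu0_gen_piece e b :
  nu0_gen R (kap t (piece_v e b)) =
  \sum_(f in Eset e b) D2 R (kap t (C e f (otgt f))) (kap t (C e f (osrc f))).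
Proof.
have hi := is_piece_induced (piece_emb_is_piece e b).
rewrite (kap_eq t hi) nu0_gen_kap [RHS]big_enum_val; apply: eq_bigr => f' _.
by rewrite !kap_sub.
Qed.

Local Notation D3 := (@D3 R K).

Definition term e f : F3 R K :=
  if piece_v e true (osrc f)
  then - D3 (kap t (piece_v e false)) (kap t (C e f (otgt f))) (kap t (C e f (osrc f)))
  else D3 (kap t (piece_v e true)) (kap t (C e f (otgt f))) (kap t (C e f (osrc f))).

Lemma w_formula :
  id_tensor (@nu0 R psi) (nu0_gen R (cls (ptree t))) =
  \sum_(e < Defs.one T) \sum_(f | f != e) term e f.
Proof.
rewrite nu0_gen_kap /id_tensor fg_sum; apply: eq_bigr => e _.
have hL : forall a b, fglift (fun q : K * K => << (a, q.1, q.2) >> : F3 R K)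
     (nu0_gen R (kap t (piece_v e b))) =
   \sum_(f in Eset e b) D3 a (kap t (C e f (otgt f))) (kap t (C e f (osrc f))).
  move=> a b; rewrite nu0_gen_piece fg_sum; apply: eq_bigr => f _.
  by rewrite /D2 L_D2.
rewrite /D2 fgB !fgU1 /= /nu0 !fgU1 !hL.
rewrite big_mkcond [X in _ - X]big_mkcond [RHS]big_mkcond -sumrB.
apply: eq_bigr => f _; rewrite /term !inE /=.
case: (eqVneq f e) => [->|fe] /=; first by rewrite subrr.
rewrite -!(pv_cl _ fe) !andbb.
case: (boolP (piece_v e true (osrc f))) => h.
  by rewrite (negbTE (pv_neg h)) sub0r.
by rewrite (pv_negb h) subr0.
Qed.

Lemma side_end (e f : 'I_(Defs.one T)) b : f != e -> piece_v e (piece_v e true (osrc f)) (endp f b).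
Proof.
move=> fe; have h : piece_v e (piece_v e true (osrc f)) (osrc f).
  by case: (boolP (piece_v e true (osrc f))) => h //; exact: (pv_negb h).
by case: b; rewrite /endp -?(pv_cl _ fe).
Qed.

Lemma term_form (e f : 'I_(Defs.one T)) : e != f ->
  term e f =
  let be := piece_v e true (osrc f) in let bf := piece_v f true (osrc e) in
  let Xe := kap t (C e f (endp e (~~ be))) in
  let Xf := kap t (C e f (endp f (~~ bf))) in
  let M := kap t (C e f (endp f bf)) in
  if be == bf then D3 Xe Xf M else - D3 Xe Xf M.
Proof.
move=> ef; have fe : f != e by rewrite eq_sym.
have hfar : kap t (piece_v e (~~ piece_v e true (osrc f))) =
            kap t (C e f (endp e (~~ piece_v e true (osrc f)))).
  have nf : ~~ piece_v e (~~ piece_v e true (osrc f)) (osrc f).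
    by case: (boolP (piece_v e true (osrc f))) => h //=; exact: (pv_neg h).
  exact: kap_ext (is_piece_induced (piece_emb_is_piece _ _)) (side fe nf).
move: hfar; rewrite /term /=.
case: (boolP (piece_v e true (osrc f))) => h hfar;
  case: (boolP (piece_v f true (osrc e))) => h' /=; rewrite hfar /endp /=.
- by rewrite D3_swap opprK.
- by [].
- by rewrite D3_swap.
- by [].
Qed.

Lemma term_antisym (e f : 'I_(Defs.one T)) : e != f -> cyc (term e f) = - cyc (term f e).
Proof.
move=> ef; have fe : f != e by rewrite eq_sym.
have hM : kap t (C e f (endp e (piece_v e true (osrc f)))) =
          kap t (C e f (endp f (piece_v f true (osrc e)))).
  apply: (kapC_ext ef); apply: C_same; apply: (near ef).
    rewrite -pvE; exact: side_end.
  exact: side_end.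
rewrite (term_form ef) (term_form fe) /= !(kapC_sym _ ef) hM eq_sym.
have hp := @cyc_pair R K (kap t (C e f (endp e (~~ piece_v e true (osrc f)))))
   (kap t (C e f (endp f (~~ piece_v f true (osrc e)))))
   (kap t (C e f (endp f (piece_v f true (osrc e))))).
move: hp; rewrite cycD => /eqP; rewrite addr_eq0 => /eqP hp.
by case: ifP => _; rewrite ?cycN hp.
Qed.

End Tr.
End Main.

End G7.
Import G7.

Module G8.
Import GRing.Theory.
Local Open Scope ring_scope.

Lemma sum_antisym (V : zmodType) n (H : 'I_n -> 'I_n -> V) :
  (forall e f, e != f -> H e f = - H f e) ->
  \sum_(e < n) \sum_(f < n | f != e) H e f = 0.
Proof.
move=> hA.
have E : forall e, \sum_(f < n | f != e) H e f =
   \sum_(f < n | (f < e)%N) H e f + \sum_(f < n) (if (e < f)%N then H e f else 0).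
  move=> e; rewrite (bigID (fun f : 'I_n => (f < e)%N)) /=; congr (_ + _).
    apply: eq_bigl => f; case: (ltnP f e) => h; rewrite ?andbT ?andbF //.
    by rewrite neq_ltn h.
  rewrite big_mkcond; apply: eq_bigr => f _.
  by rewrite -leqNgt ltn_neqAle eq_sym.
rewrite (eq_bigr _ (fun e _ => E e)) big_split /= exchange_big /=.
rewrite -big_split /=; apply: big1 => e _.
rewrite big_mkcond -big_split /=; apply: big1 => f _.
case: ifP => h; last by rewrite addr0.
by rewrite (hA e f) ?addNr // neq_ltn h orbT.
Qed.

Section Final.
Variables (R : comNzRingType) (psi : otree_structure).
Local Notation K := (hclass psi).

Lemma nu0U k (z : K) : @nu0 R psi << k *g z >> = k *: nu0_gen R z.
Proof. by rewrite /nu0 fgU. Qed.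

Lemma tperm_nu0_gen (z : K) : tperm (nu0_gen R z) = - nu0_gen R z.
Proof.
have [[T t] <-] := cls_surj z.
rewrite (nu0_gen_kap R t) /tperm fg_sum -sumrN; apply: eq_bigr => e _.
exact: tperm_D2.
Qed.

Lemma cycZ k (w : F3 R K) : cyc (k *: w) = k *: cyc w.
Proof. by rewrite /cyc /ttau !fgZ !scalerDr. Qed.

Lemma cyc_gen (z : K) : cyc (id_tensor (@nu0 R psi) (nu0_gen R z)) = 0.
Proof.
have [[T t] <-] := cls_surj z.
rewrite (w_formula R t) cyc_sum (eq_bigr _ (fun e _ => cyc_sum _ _ _)).
apply: sum_antisym => e f ef; exact: term_antisym.
Qed.

End Final.


End G8.
Import G8.
Import GRing.Theory.
Local Open Scope ring_scope.

Theorem lemma6p2 (R : comNzRingType) (psi : otree_structure) :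
  lie_cobracket (@nu0 R psi).
Proof.
split.
- by move=> a u v; rewrite /nu0 fgD fgZ.
- move=> x; apply/eqP; rewrite -addr_eq0; apply/eqP; move: x.
  apply: freeg_zero => [x y|k z].
    by rewrite /nu0 fgD /tperm fgD addrACA.
  have := tperm_nu0_gen R z; rewrite nu0U /tperm fgZ => ->.
  by rewrite scalerN addNr.
- move=> x; change (cyc (id_tensor (@nu0 R psi) (@nu0 R psi x)) = 0); move: x.
  apply: freeg_zero => [x y|k z].
    by rewrite /nu0 fgD -/nu0 /id_tensor fgD -/id_tensor cycD.
  have := cyc_gen R z; rewrite nu0U /id_tensor fgZ cycZ => ->.
  by rewrite scaler0.
Qed.
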